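(* Let $\mathcal{M}_{\mathbb{P}}=(\mathcal{M},\mathbb{P})$ be an uncertain parametric MDP and let $\mathcal{U}_N=\{u_1,\dots,u_N\}$, $N\ge 1$, be a set of parameter instantiations sampled independently from $\mathbb{P}$. Let $\varphi$ be a specification (a measure, a comparison operator and a threshold) whose threshold $\lambda^*(\mathcal{U}_N)$ is chosen, for any sample set $\mathcal{U}_N$, such that every sample satisfies it, i.e. $\mathcal{M}[u]\models\varphi$ for all $u\in\mathcal{U}_N$. Fix a confidence probability $\beta\in(0,1)$. Then \[\mathbb{P}^N\Big\{F(\mathcal{M}_{\mathbb{P}},\varphi)\ \ge\ (1-\beta)^{1/N}\Big\}\ \ge\ \beta .\]
   Context: A parametric MDP (pMDP) is $\mathcal{M}=(S,\mathit{Act},s_I,V,\mathcal{P})$ with finite state set $S$, finite action set $\mathit{Act}$, initial state $s_I$, finite parameter set $V$, and transition function $\mathcal{P}:S\times\mathit{Act}\times S\to\mathbb{Q}[V]$ (polynomials in the parameters). The parameter space $\mathcal{V}_{\mathcal{M}}$ consists of instantiations $u:V\to\mathbb{R}$; $\mathcal{M}[u]$ is the MDP obtained by evaluating every polynomial at $u$. All instantiations are assumed to give well-defined MDPs and to be graph-preserving (nonzero transitions get values in $(0,1]$). An uncertain pMDP (upMDP) is a pair $\mathcal{M}_{\mathbb{P}}=(\mathcal{M},\mathbb{P})$ with $\mathbb{P}$ a (possibly unknown) probability distribution over $\mathcal{V}_{\mathcal{M}}$. A specification $\varphi$ consists of a measure on MDPs (e.g. maximal/minimal reachability probability of a target set,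 expected reward until reaching a target), a comparison operator in $\{<,\le,\ge,>\}$ and a threshold $\lambda$; $\mathcal{M}[u]\models\varphi$ means the measure's value for $\mathcal{M}[u]$ compares to $\lambda$ as prescribed. The satisfaction probability is $F(\mathcal{M}_{\mathbb{P}},\varphi)=\int_{\mathcal{V}_{\mathcal{M}}} I_\varphi(u)\,d\mathbb{P}(u)$, where $I_\varphi(u)=1$ iff $\mathcal{M}[u]\models\varphi$ and $0$ otherwise (assumed measurable). $\mathbb{P}^N$ denotes the $N$-fold product measure governing the i.i.d. sample set $\mathcal{U}_N$. *)

(* Defs.v *)
From HB Require Import structures.
From mathcomp Require Import all_boot all_order all_algebra.
From mathcomp Require Import all_classical all_reals all_analysis.
Set Implicit Arguments. Unset Strict Implicit. Unset Printing Implicit Defensive.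
Import Order.TTheory GRing.Theory Num.Theory.
Local Open Scope classical_set_scope.
Local Open Scope ring_scope.

Inductive cmp_op := CLt | CLe | CGe | CGt.

(* [sat op v lam]: the measure value [v] compares to threshold [lam] as
   prescribed by [op]; i.e. M[u] |= phi iff sat op (meas M[u]) lam. *)
Definition sat {R : realType} (op : cmp_op) (v lam : R) : Prop :=
  match op with
  | CLt => v < lam
  | CLe => v <= lam
  | CGe => lam <= v
  | CGt => lam < v
  end.

Definition sat_prob {R : realType} {d} {T : measurableType d}
  (P : probability T R) {MDP : Type} (inst : T -> MDP) (meas : MDP -> R)
  (op : cmp_op) (lam : R) : \bar R :=
  P [set u | sat op (meas (inst u)) lam].

(* [PN] is the N-fold product measure P^N on N-tuples of parameter
   instantiations: it gives every measurable rectangle the product of the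
   marginal probabilities (this determines P^N uniquely). *)
Definition is_product_prob {R : realType} {d} {T : measurableType d}
  (N : nat) (P : probability T R) (PN : probability (N.-tuple T) R) : Prop :=
  forall A : 'I_N -> set T, (forall i, measurable (A i)) ->
    PN [set s | forall i, A i (tnth s i)] = (\prod_(i < N) P (A i))%E.

(* Main.v *)
Require Import Defs.
From HB Require Import structures.
From mathcomp Require Import all_boot all_order all_algebra.
From mathcomp Require Import all_classical all_reals all_analysis.
Import Order.TTheory GRing.Theory Num.Theory.
Local Open Scope classical_set_scope.
Local Open Scope ring_scope.

Lemma cofinal (R : realType) (C : set R) : C !=set0 ->
  exists t : nat -> R, (forall n, C (t n)) /\ (forall x, C x -> exists n, x <= t n).
Proof.
move=> hC.
case: (pselect (has_ubound C)) => hub.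
  have hs : has_sup C by split.
  case: (pselect (C (sup C))) => hc.
    exists (fun=> sup C); split => // x Cx; exists 0%N; exact: ub_le_sup.
  have h (n : nat) : exists e, C e /\ sup C - n.+1%:R^-1 < e.
    have [e ? ?] : exists2 e, C e & sup C - n.+1%:R^-1 < e.
      by apply: sup_adherent => //; rewrite invr_gt0 ltr0n.
    by exists e.
  have /choice [t Ht] := h.
  have Ct n := (Ht n).1.
  have ht n := (Ht n).2.
  exists t; split => // x Cx.
  have xc : x < sup C.
    rewrite lt_neqAle ub_le_sup // andbT; apply/eqP => exc; apply: hc; by rewrite -exc.
  have [k hk] := ltr_add_invr xc.
  exists k; apply: ltW; apply: lt_trans (ht k).
  by rewrite -ltrBrDr in hk.
have h (n : nat) : exists y, C y /\ n%:R < y.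
  by move/has_ubPn: hub => /(_ n%:R) [y ? ?]; exists y.
have /choice [t Ht] := h.
have Ct n := (Ht n).1.
have ht n := (Ht n).2.
exists t; split => // x Cx.
exists (Num.truncn x).+1; apply: ltW; apply: lt_trans (ht _).
exact: truncnS_gt.
Qed.

Fixpoint runmax {R : realType} (t : nat -> R) (n : nat) : R :=
  match n with 0%N => t 0%N | n'.+1 => Num.max (runmax t n') (t n) end.

Lemma key (R : realType) (d : measure_display) (T : measurableType d)
  (P : probability T R) (S : R -> set T) (mS : forall t, measurable (S t))
  (mono : forall t t', t <= t' -> S t `<=` S t') (q : R) (q0 : 0 <= q) :
  exists A, measurable A /\ (P A <= q%:E)%E /\
    forall t, (P (S t) < q%:E)%E -> S t `<=` A.
Proof.
set C := [set t | (P (S t) < q%:E)%E].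
case: (pselect (C !=set0)) => hC; last first.
  exists set0; split => //; split; first by rewrite measure0 lee_fin.
  by move=> t Ct; exfalso; apply: hC; exists t.
have [t [Ct cof]] := @cofinal _ _ hC.
set u := runmax t.
have Cu n : C (u n).
  elim: n => [|n IH] /=; first exact: Ct.
  have [h|h] := leP (runmax t n) (t n.+1); rewrite /u /=; first by rewrite max_r.
  by rewrite /u /= max_l // ltW.
have tu n : t n <= u n.
  by case: n => [|n]; rewrite /u /= ?lexx // le_max lexx orbT.
have uS n : u n <= u n.+1 by rewrite /u /= le_max lexx.
exists (\bigcup_n S (u n)); split; first exact: bigcupT_measurable.
split.
  have nd : nondecreasing_seq (fun n => S (u n)).
    apply/nondecreasing_seqP => n; rewrite subsetEset; exact: mono.
  have cv := @nondecreasing_cvg_mu _ _ _ P _ (fun n => mS (u n)) (bigcupT_measurable _ (fun n => mS (u n))) nd.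
  rewrite -(cvg_lim _ cv) //; apply: lime_le; first exact: cvgP cv.
  by near=> n; apply/ltW; exact: Cu.
move=> t0 Ct0 x Sx.
have [n hn] := cof t0 Ct0.
exists n => //; apply: (mono t0) => //; exact: le_trans (tu n).
Unshelve. all: by end_near.
Qed.

Theorem theorem1 (R : realType) (d : measure_display) (T : measurableType d)
  (P : probability T R) (MDP : Type) (inst : T -> MDP) (meas : MDP -> R)
  (op : cmp_op)
  (Hmeas : forall lam : R, measurable [set u | sat op (meas (inst u)) lam])
  (N : nat) (HN : (0 < N)%N)
  (PN : probability (N.-tuple T) R) (HPN : is_product_prob P PN)
  (lamstar : N.-tuple T -> R)
  (Hlam : forall (s : N.-tuple T) (i : 'I_N),
      sat op (meas (inst (tnth s i))) (lamstar s))
  (beta : R) (Hbeta : 0 < beta < 1)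
  (Hev : measurable [set s : N.-tuple T |
      (((1 - beta) `^ (N%:R^-1))%:E <= sat_prob P inst meas op (lamstar s))%E]) :
  (beta%:E <= PN [set s : N.-tuple T |
      (((1 - beta) `^ (N%:R^-1))%:E <= sat_prob P inst meas op (lamstar s))%E])%E.
Proof.
set sg : R := match op with CLt | CLe => 1 | _ => -1 end.
have sg2 : sg * sg = 1 by rewrite /sg; case: (op); rewrite ?mulr1 ?mulrNN ?mulr1.
set S := fun t => [set u | sat op (meas (inst u)) (sg * t)].
have mS t : measurable (S t) := Hmeas (sg * t).
have mono t t' : t <= t' -> S t `<=` S t'.
  move=> tt' u; rewrite /S /sat /sg /=; case: (op); rewrite ?mul1r ?mulN1r => h.
  - exact: lt_le_trans h tt'.
  - exact: le_trans h tt'.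
  - by apply: le_trans h; rewrite lerN2.
  - by apply: le_lt_trans h; rewrite lerN2.
set q := (1 - beta) `^ N%:R^-1.
have q0 : 0 <= q := powR_ge0 _ _.
have [A [mA [PA cover]]] := @key _ _ _ P _ mS mono _ q0.
set E := [set s : N.-tuple T | _].
have SE s : sat_prob P inst meas op (lamstar s) = P (S (sg * lamstar s)).
  by rewrite /sat_prob /S mulrA sg2 mul1r.
set Rc := [set s : N.-tuple T | forall i, A (tnth s i)].
have sub : ~` E `<=` Rc.
  move=> s nEs i; apply: (cover (sg * lamstar s)).
    by rewrite -SE ltNge; apply/negP => h; apply: nEs.
  by rewrite /S /= mulrA sg2 mul1r; exact: Hlam.
have mRc : measurable Rc.
  have -> : Rc = \bigcap_(i in [set: 'I_N]) ((@tnth N T)^~ i @^-1` A).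
    by apply/seteqP; split => s /= h i; [move=> _; exact: h | exact: h].
  apply: fin_bigcap_measurable; first exact: finite_finset. move=> i _.
  by rewrite -[X in measurable X]setTI; apply: measurable_tnth.
have PNR : PN Rc = (\prod_(i < N) P A)%E := HPN (fun=> A) (fun=> mA).
have qN : q ^+ N = 1 - beta.
  rewrite -powR_mulrn ?powR_ge0 // -powRrM mulVf ?pnatr_eq0 -?lt0n // powRr1 //.
  by rewrite subr_ge0; case/andP: Hbeta => _ /ltW.
have PAf : P A = (fine (P A))%:E by rewrite fineK // fin_num_measure.
have prodle : (\prod_(i < N) P A <= (1 - beta)%:E)%E.
  rewrite PAf prodEFin lee_fin prodr_const card_ord -qN.
  apply: lerXn2r; rewrite ?qualifE //= ?fine_ge0 ?measure_ge0 //.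
  by rewrite -lee_fin -PAf.
have PNc : (PN (~` E) <= (1 - beta)%:E)%E.
  apply: le_trans prodle; rewrite -PNR; apply: le_measure; rewrite ?inE //.
  exact: measurableC.
rewrite probability_setC // in PNc.
have PEf : PN E = (fine (PN E))%:E by rewrite fineK // fin_num_measure.
rewrite PEf in PNc *; rewrite lee_fin; rewrite -EFinB lee_fin in PNc.
by rewrite lerD2l lerN2 in PNc.
Qed.
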